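(* Let $\gamma$ be the Euler–Mascheroni constant and $\lambda(s)=\sum_{n\ge0}(2n+1)^{-s}$ (for real $s>1$). Then $$\lim_{x\to\infty}\left\{\lambda(\lambda(x))-\frac12\left[3^x-\Bigl(\frac95\Bigr)^x-\Bigl(\frac97\Bigr)^x+\Bigl(\frac{27}{25}\Bigr)^x-1\right]\right\}=\frac12(\gamma+\ln2).$$ *)

(* Defs.v *)
From Stdlib Require Import Reals.
From Coquelicot Require Import Coquelicot.
Open Scope R_scope.

Definition dlambda (s : R) : R :=
  Series (fun n : nat => Rpower (2 * INR n + 1) (- s)).

Definition euler_gamma : R :=
  real (Lim_seq (fun n : nat =>
    sum_n_m (fun k : nat => / INR k) 1 n - ln (INR n))).

(* Main.v *)
Require Import Defs.
From Stdlib Require Import Reals Lra Lia.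
From Coquelicot Require Import Coquelicot.
Open Scope R_scope.


Lemma ln_le_lin x : 0 < x -> ln x <= x - 1.
Proof.
  intros Hx. rewrite <- (ln_exp (x-1)). apply ln_le; auto.
  pose proof (exp_ineq1_le (x-1)). lra.
Qed.

Lemma exp_diff_le a b : exp a - exp b <= (a-b)*exp a.
Proof.
  replace (exp b) with (exp a * exp (b-a)).
  2:{ rewrite <- exp_plus. f_equal; ring. }
  pose proof (exp_ineq1_le (b-a)). pose proof (exp_pos a). nra.
Qed.

Lemma exp_diff_ge a b : (a-b)*exp b <= exp a - exp b.
Proof.
  replace (exp a) with (exp b * exp (a-b)).
  2:{ rewrite <- exp_plus. f_equal; ring. }
  pose proof (exp_ineq1_le (a-b)). pose proof (exp_pos b). nra.
Qed.

Lemma ln_gap m : 0 < m -> 2/(m+2) <= ln (m+2) - ln m <= 2/m.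
Proof.
  intros Hm. split.
  - pose proof (ln_le_lin (m/(m+2)) ltac:(apply Rdiv_lt_0_compat; lra)) as H.
    rewrite ln_div in H by lra.
    assert (m/(m+2) - 1 = - (2/(m+2))) by (field; lra). lra.
  - pose proof (ln_le_lin ((m+2)/m) ltac:(apply Rdiv_lt_0_compat; lra)) as H.
    rewrite ln_div in H by lra.
    assert ((m+2)/m - 1 = 2/m) by (field; lra). lra.
Qed.

Lemma div_le_h a b c : 0 < c -> a <= c*b -> a/c <= b.
Proof. intros Hc H. replace b with ((c*b)/c) by (field; lra).
  unfold Rdiv. apply Rmult_le_compat_r; auto. left; apply Rinv_0_lt_compat; auto. Qed.
Lemma div_ge_h a b c : 0 < c -> c*b <= a -> b <= a/c.
Proof. intros Hc H. replace b with ((c*b)/c) by (field; lra).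
  unfold Rdiv. apply Rmult_le_compat_r; auto. left; apply Rinv_0_lt_compat; auto. Qed.

Definition mm (n:nat) : R := 2 * INR n + 1.
Definition tt s n := Rpower (mm n) (-s).
Definition dd s n := (Rpower (mm n) (1-s) - Rpower (mm (S n)) (1-s)) / (2*(s-1)).

Lemma mm_pos n : 1 <= mm n.
Proof. unfold mm. pose proof (pos_INR n). lra. Qed.
Lemma mm_S n : mm (S n) = mm n + 2.
Proof. unfold mm. rewrite S_INR. ring. Qed.

Lemma key_ineq s n : 1 < s -> tt s (S n) <= dd s n <= tt s n.
Proof.
  intros Hs. unfold tt, dd. rewrite mm_S. pose proof (mm_pos n) as Hm.
  set (m := mm n) in *. unfold Rpower.
  pose proof (ln_gap m ltac:(lra)) as [G1 G2].
  assert (Em : exp (-s * ln m) = exp ((1-s)*ln m) / m).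
  { replace (-s * ln m) with ((1-s)*ln m + - ln m) by ring.
    rewrite exp_plus, exp_Ropp, exp_ln by lra. field; lra. }
  assert (Em2 : exp (-s * ln (m+2)) = exp ((1-s)*ln (m+2)) / (m+2)).
  { replace (-s * ln (m+2)) with ((1-s)*ln (m+2) + - ln (m+2)) by ring.
    rewrite exp_plus, exp_Ropp, exp_ln by lra. field; lra. }
  rewrite Em, Em2.
  pose proof (exp_diff_le ((1-s)*ln m) ((1-s)*ln(m+2))) as U.
  pose proof (exp_diff_ge ((1-s)*ln m) ((1-s)*ln(m+2))) as L.
  pose proof (exp_pos ((1-s)*ln m)) as P1.
  pose proof (exp_pos ((1-s)*ln (m+2))) as P2.
  set (X := exp ((1-s)*ln m)) in *. set (Y := exp ((1-s)*ln (m+2))) in *.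
  set (D := ln (m+2) - ln m) in *.
  replace ((1 - s) * ln m - (1 - s) * ln (m + 2)) with ((s-1)*D) in U, L by (unfold D; ring).
  split.
  - apply div_ge_h; [lra|].
    assert ((s-1)*(2/(m+2))*Y <= (s-1)*D*Y).
    { apply Rmult_le_compat_r; [lra|]. apply Rmult_le_compat_l; lra. }
    replace (2 * (s - 1) * (Y / (m + 2))) with ((s-1)*(2/(m+2))*Y) by (field; lra). lra.
  - apply div_le_h; [lra|].
    assert ((s-1)*D*X <= (s-1)*(2/m)*X).
    { apply Rmult_le_compat_r; [lra|]. apply Rmult_le_compat_l; lra. }
    replace (2 * (s - 1) * (X / m)) with ((s-1)*(2/m)*X) by (field; lra). lra.
Qed.

Lemma sum_n_minus (u v : nat -> R) N : sum_n (fun n => u n - v n) N = sum_n u N - sum_n v N.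
Proof. induction N. - rewrite !sum_O; reflexivity.
  - rewrite !sum_Sn, IHN. unfold plus; simpl. ring. Qed.

Lemma sum_n_tele (f : nat -> R) N : sum_n (fun n => f n - f (S n)) N = f O - f (S N).
Proof. induction N. - rewrite sum_O; reflexivity.
  - rewrite sum_Sn, IHN. unfold plus; simpl. ring. Qed.

Lemma lim_bounds u (l lo hi : R) N : is_lim_seq u l ->
  (forall n, (N <= n)%nat -> lo <= u n <= hi) -> lo <= l <= hi.
Proof.
  intros Hl Hb. apply is_lim_seq_spec in Hl.
  split; apply Rnot_lt_le; intros C.
  - assert (He: 0 < lo - l) by lra. destruct (Hl (mkposreal _ He)) as [N1 HN1].
    specialize (HN1 (max N N1) ltac:(lia)). specialize (Hb (max N N1) ltac:(lia)).
    simpl in HN1. apply Rabs_def2 in HN1. lra.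
  - assert (He: 0 < l - hi) by lra. destruct (Hl (mkposreal _ He)) as [N1 HN1].
    specialize (HN1 (max N N1) ltac:(lia)). specialize (Hb (max N N1) ltac:(lia)).
    simpl in HN1. apply Rabs_def2 in HN1. lra.
Qed.

Lemma partial_gap (a f : nat -> R) : (forall n, 0 <= a n <= f n - f (S n)) ->
  forall N k, 0 <= sum_n a (N + k) - sum_n a N <= f (S N) - f (S (N + k)).
Proof.
  intros Ha N k. induction k.
  - rewrite Nat.add_0_r. lra.
  - rewrite Nat.add_succ_r, sum_Sn. unfold plus; simpl.
    specialize (Ha (S (N+k))). lra.
Qed.

Lemma series_tail (a f : nat -> R) : (forall n, 0 <= a n <= f n - f (S n)) ->
  (forall n, 0 <= f n) ->
  forall N, sum_n a N <= real (Lim_seq (sum_n a)) <= sum_n a N + f (S N)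
  /\ is_lim_seq (sum_n a) (real (Lim_seq (sum_n a))).
Proof.
  intros Ha Hf.
  assert (Hex : ex_finite_lim_seq (sum_n a)).
  { apply ex_finite_lim_seq_incr with (f O).
    - intros n. rewrite sum_Sn. unfold plus; simpl. specialize (Ha (S n)). lra.
    - intros n. pose proof (partial_gap a f Ha O n) as H. simpl in H.
      rewrite sum_O in H. specialize (Ha O). specialize (Hf (S n)). lra. }
  destruct Hex as [l Hl]. rewrite (is_lim_seq_unique _ _ Hl). simpl.
  intros N. split; auto.
  apply (lim_bounds _ l _ _ N Hl). intros n Hn.
  replace n with (N + (n - N))%nat by lia.
  pose proof (partial_gap a f Ha N (n-N)). specialize (Hf (S (N + (n-N)))). lra.
Qed.

Definition aa s n := tt s n - dd s n.
Definition FF s := real (Lim_seq (sum_n (aa s))).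

Lemma tt_pos s n : 0 < tt s n.
Proof. unfold tt, Rpower. apply exp_pos. Qed.

Lemma aa_bound s n : 1 < s -> 0 <= aa s n <= tt s n - tt s (S n).
Proof. intros Hs. pose proof (key_ineq s n Hs). unfold aa. lra. Qed.

Lemma FF_spec s : 1 < s -> forall N,
  sum_n (aa s) N <= FF s <= sum_n (aa s) N + tt s (S N)
  /\ is_lim_seq (sum_n (aa s)) (FF s).
Proof.
  intros Hs. apply series_tail.
  - intros n; apply aa_bound; auto.
  - intros n; left; apply tt_pos.
Qed.

Lemma pow_to0 q : q < 0 -> is_lim_seq (fun N => Rpower (mm N) q) 0.
Proof.
  intros Hq. apply is_lim_seq_spec. intros eps.
  set (K := ln eps / q).
  destruct (INR_unbounded (exp K)) as [N0 HN0].
  exists N0. intros N HN.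
  assert (HI : INR N0 <= INR N) by (apply le_INR; lia).
  assert (Hm : exp K < mm N) by (unfold mm; pose proof (pos_INR N); lra).
  assert (HL : K < ln (mm N)).
  { rewrite <- (ln_exp K) at 1. apply ln_increasing; auto. apply exp_pos. }
  unfold Rpower. rewrite Rminus_0_r, Rabs_pos_eq by (left; apply exp_pos).
  pose proof (cond_pos eps) as He.
  rewrite <- (exp_ln eps) by auto. apply exp_increasing.
  assert (q * K = ln eps) by (unfold K; field; lra).
  nra.
Qed.

Lemma Rpower_1_base y : Rpower 1 y = 1.
Proof. unfold Rpower. rewrite ln_1, Rmult_0_r, exp_0. reflexivity. Qed.

Lemma sum_dd s N : 1 < s -> sum_n (dd s) N = (1 - Rpower (mm (S N)) (1-s)) / (2*(s-1)).
Proof.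
  intros Hs. induction N.
  - rewrite sum_O. unfold dd. replace (mm 0) with 1 by (unfold mm; simpl; ring).
    rewrite Rpower_1_base. reflexivity.
  - rewrite sum_Sn, IHN. unfold plus; simpl. unfold dd. field. lra.
Qed.

Lemma dlambda_eq s : 1 < s -> dlambda s = FF s + / (2*(s-1)).
Proof.
  intros Hs. unfold dlambda, Series.
  assert (H : is_lim_seq (sum_n (tt s)) (FF s + (1 - 0)/(2*(s-1)))).
  { apply is_lim_seq_ext with (fun N => sum_n (aa s) N + (1 - Rpower (mm (S N)) (1-s)) / (2*(s-1))).
    - intros N. rewrite <- sum_dd by auto. unfold aa. rewrite sum_n_minus. ring.
    - apply is_lim_seq_plus'. { apply (FF_spec s Hs O). }
      unfold Rdiv. apply is_lim_seq_mult'. 2: apply is_lim_seq_const.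
      apply is_lim_seq_minus'. apply is_lim_seq_const.
      apply (is_lim_seq_incr_1 (fun N => Rpower (mm N) (1-s))). apply pow_to0. lra. }
  change (fun n : nat => Rpower (2 * INR n + 1) (- s)) with (tt s).
  rewrite (is_lim_seq_unique _ _ H). simpl. field. lra.
Qed.

Definition Hs n := sum_n_m (fun k : nat => / INR k) 1 n.
Definition gg n := Hs n - ln (INR n).

Lemma Hs_0 : Hs 0 = 0.
Proof. unfold Hs. rewrite sum_n_m_zero by lia. reflexivity. Qed.
Lemma Hs_S n : Hs (S n) = Hs n + / INR (S n).
Proof. unfold Hs. rewrite sum_n_Sm by lia. reflexivity. Qed.

Lemma INR_S_pos n : 0 < INR (S n).
Proof. rewrite S_INR. pose proof (pos_INR n). lra. Qed.

Lemma Hs_ge_ln n : ln (INR (S n)) <= Hs n.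
Proof.
  induction n.
  - rewrite Hs_0. simpl. rewrite ln_1. lra.
  - rewrite Hs_S. pose proof (INR_S_pos n) as P.
    set (x := INR (S n)) in *. rewrite (S_INR (S n)). fold x.
    pose proof (ln_le_lin ((x+1)/x) ltac:(apply Rdiv_lt_0_compat; lra)) as H.
    rewrite ln_div in H by lra.
    assert ((x+1)/x - 1 = / x) by (field; lra). lra.
Qed.

Lemma gg_dec n : gg (S (S n)) <= gg (S n).
Proof.
  unfold gg. rewrite Hs_S. pose proof (INR_S_pos n) as P.
  set (x := INR (S n)) in *. rewrite (S_INR (S n)). fold x.
  pose proof (ln_le_lin (x/(x+1)) ltac:(apply Rdiv_lt_0_compat; lra)) as H.
  rewrite ln_div in H by lra.
  assert (x/(x+1) - 1 = - / (x+1)) by (field; lra). lra.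
Qed.

Lemma gg_pos n : 0 <= gg (S n).
Proof.
  unfold gg. pose proof (Hs_ge_ln n). rewrite Hs_S. pose proof (Rinv_0_lt_compat _ (INR_S_pos n)). lra.
Qed.

Lemma gamma_lim : is_lim_seq gg euler_gamma.
Proof.
  assert (Hex : ex_finite_lim_seq (fun n => gg (S n))).
  { apply ex_finite_lim_seq_decr with 0. apply gg_dec. apply gg_pos. }
  destruct Hex as [l Hl].
  assert (E : euler_gamma = l).
  { unfold euler_gamma. change (fun n : nat => sum_n_m (fun k : nat => / INR k) 1 n - ln (INR n)) with gg.
    rewrite <- Lim_seq_incr_1. rewrite (is_lim_seq_unique _ _ Hl). reflexivity. }
  rewrite E. apply is_lim_seq_incr_1. auto.
Qed.

Lemma odd_sum N : sum_n (fun n => / mm n) N = Hs (2*N+2) - Hs (N+1) / 2.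
Proof.
  induction N.
  - rewrite sum_O. simpl. rewrite !Hs_S, Hs_0. unfold mm. simpl. field.
  - rewrite sum_Sn, IHN. change (plus ?a ?b) with (a + b).
    replace (2 * S N + 2)%nat with (S (S (2*N+2))) by lia.
    replace (S N + 1)%nat with (S (N+1)) by lia.
    rewrite !Hs_S.
    assert (E1 : INR (S (2*N+2)) = 2 * INR N + 3) by (rewrite S_INR, plus_INR, mult_INR; simpl; ring).
    assert (E2 : INR (S (S (2*N+2))) = 2 * INR N + 4) by (rewrite S_INR, E1; ring).
    assert (E3 : INR (S (N+1)) = INR N + 2) by (rewrite S_INR, plus_INR; simpl; ring).
    assert (E4 : mm (S N) = 2 * INR N + 3) by (rewrite mm_S; unfold mm; ring).
    rewrite E1, E2, E3, E4.
    pose proof (pos_INR N). match goal with |- ?a = ?b => change (@eq R a b) end. field. lra.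
Qed.

Definition a1 n := / mm n - (ln (mm (S n)) - ln (mm n)) / 2.

Lemma a1_bound n : 0 <= a1 n <= / mm n - / mm (S n).
Proof.
  unfold a1. rewrite mm_S. pose proof (mm_pos n) as P.
  pose proof (ln_gap (mm n) ltac:(lra)) as [G1 G2].
  assert (2/(mm n+2) = 2 * / (mm n + 2)) by (unfold Rdiv; ring).
  assert (2/(mm n) = 2 * / (mm n)) by (unfold Rdiv; ring).
  lra.
Qed.

Lemma Q1_form N : sum_n a1 N = gg (2*N+2) - gg (N+1) / 2 + ln 2
   - (ln (2 * INR (N+1) + 1) - ln (INR (N+1)) - ln 2) / 2 - ln 2 / 2.
Proof.
  unfold a1. rewrite sum_n_minus.
  assert (Ht : sum_n (fun n => (ln (mm (S n)) - ln (mm n)) / 2) N = (ln (mm (S N)) - ln (mm O))/2).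
  { induction N. - rewrite sum_O. reflexivity.
    - rewrite sum_Sn, IHN. unfold plus; simpl. field. }
  rewrite Ht, odd_sum. unfold gg.
  replace (mm 0) with 1 by (unfold mm; simpl; ring). rewrite ln_1.
  replace (INR (2*N+2)) with (2 * INR (N+1)) by (rewrite !plus_INR, mult_INR; simpl; ring).
  pose proof (INR_S_pos N). replace (INR (N+1)) with (INR (S N)) by (f_equal; lia).
  rewrite ln_mult by lra. unfold mm. match goal with |- ?a = ?b => change (@eq R a b) end. field.
Qed.

Lemma Q1_lim : is_lim_seq (sum_n a1) ((euler_gamma + ln 2)/2).
Proof.
  apply is_lim_seq_ext with (fun N => gg (2*N+2) - gg (N+1) / 2 + ln 2
   - (ln (2 * INR (N+1) + 1) - ln (INR (N+1)) - ln 2) / 2 - ln 2 / 2).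
  { intros; symmetry; apply Q1_form. }
  replace ((euler_gamma + ln 2)/2) with (euler_gamma - euler_gamma/2 + ln 2 - 0/2 - ln 2/2) by field.
  apply is_lim_seq_minus'; [|apply is_lim_seq_const].
  apply is_lim_seq_minus'.
  2:{ unfold Rdiv. apply is_lim_seq_mult'; [|apply is_lim_seq_const].
      apply is_lim_seq_le_le with (fun _ => 0) (fun N => / (2 * INR (N+1))).
      - intros N. pose proof (INR_S_pos N). replace (INR (N+1)) with (INR (S N)) by (f_equal; lia).
        set (x := INR (S N)) in *.
        assert (E: ln (2*x) = ln 2 + ln x) by (apply ln_mult; lra).
        assert (L1: ln (2*x) <= ln (2*x+1)) by (apply ln_le; lra).
        pose proof (ln_le_lin ((2*x+1)/(2*x)) ltac:(apply Rdiv_lt_0_compat; lra)) as H1.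
        rewrite ln_div in H1 by lra.
        assert ((2*x+1)/(2*x) - 1 = / (2*x)) by (field; lra). lra.
      - apply is_lim_seq_const.
      - replace (Finite 0) with (Rbar_inv p_infty) by reflexivity.
        apply is_lim_seq_inv; [|discriminate].
        apply is_lim_seq_ext with (fun N => 2 * INR (S N)).
        { intros N. f_equal. f_equal. lia. }
        replace p_infty with (Rbar_mult 2 p_infty) by (simpl; destruct (Rle_dec 0 2); try lra;
           destruct (Rle_lt_or_eq_dec 0 2 r); [reflexivity| lra]).
        apply is_lim_seq_scal_l. apply (is_lim_seq_incr_1 INR). apply is_lim_seq_INR. }
  apply is_lim_seq_plus'; [|apply is_lim_seq_const].
  apply is_lim_seq_minus'.
  - apply (is_lim_seq_subseq gg euler_gamma (fun N => 2*N+2)%nat).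
    + apply eventually_subseq. intros; lia.
    + apply gamma_lim.
  - unfold Rdiv. apply is_lim_seq_mult'; [|apply is_lim_seq_const].
    apply is_lim_seq_ext with (fun N => gg (S N)). { intros; f_equal; lia. }
    apply (is_lim_seq_incr_1 gg). apply gamma_lim.
Qed.

Lemma c_bounds N : sum_n a1 N <= (euler_gamma + ln 2)/2 <= sum_n a1 N + / mm (S N).
Proof.
  destruct (series_tail a1 (fun n => / mm n)) with N as [H1 H2].
  - apply a1_bound.
  - intros n. left. apply Rinv_0_lt_compat. pose proof (mm_pos n). lra.
  - rewrite (is_lim_seq_unique _ _ Q1_lim) in H1. exact H1.
Qed.

Lemma exp_dq k : forall e, 0 < e -> exists d, 0 < d /\
  forall h, 0 < h < d -> Rabs ((exp (h*k) - 1)/h - k) < e.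
Proof.
  intros e He.
  assert (D : derivable_pt_lim (fun h => exp (h*k)) 0 k).
  { apply is_derive_Reals. auto_derive; auto. rewrite Rmult_0_l, exp_0. ring. }
  destruct (D e He) as [d Hd]. exists d. split; [apply cond_pos|].
  intros h Hh. specialize (Hd h ltac:(lra) ltac:(rewrite Rabs_pos_eq; lra)).
  rewrite Rplus_0_l, Rmult_0_l, exp_0 in Hd. exact Hd.
Qed.

Lemma aa_cont n : forall eps, 0 < eps -> exists d, 0 < d /\
  forall s, 1 < s < 1 + d -> Rabs (aa s n - a1 n) < eps.
Proof.
  intros eps He.
  set (L := ln (mm n)). set (L' := ln (mm (S n))).
  assert (HL : 0 <= L).
  { unfold L. rewrite <- ln_1. apply ln_le; [lra|apply mm_pos]. }
  set (e := Rmin (eps/4) 1).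
  assert (He' : 0 < e) by (unfold e; apply Rmin_pos; lra).
  destruct (exp_dq (-L) e He') as [d1 [Hd1 H1]].
  destruct (exp_dq (-L') e He') as [d2 [Hd2 H2]].
  set (d3 := eps / (2*(L+1))).
  assert (Hd3 : 0 < d3) by (unfold d3; apply Rdiv_lt_0_compat; lra).
  exists (Rmin d1 (Rmin d2 d3)). split. { apply Rmin_pos; auto. apply Rmin_pos; auto. }
  intros s Hs.
  assert (Hm1 := Rmin_l d1 (Rmin d2 d3)). assert (Hm2 := Rmin_r d1 (Rmin d2 d3)).
  assert (Hm3 := Rmin_l d2 d3). assert (Hm4 := Rmin_r d2 d3).
  set (h := s - 1).
  assert (Hhs : h = s - 1) by reflexivity. assert (Hh : 0 < h) by (unfold h; lra).
  specialize (H1 h ltac:(unfold h; lra)). specialize (H2 h ltac:(unfold h; lra)).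
  set (q1 := (exp (h * - L) - 1) / h) in *.
  set (q2 := (exp (h * - L') - 1) / h) in *.
  assert (Ee : e <= eps/4 /\ e <= 1) by (unfold e; split; [apply Rmin_l|apply Rmin_r]).
  assert (Ex1 : exp (h * - L) = 1 + h * q1) by (unfold q1; field; lra).
  assert (Ex2 : exp (h * - L') = 1 + h * q2) by (unfold q2; field; lra).
  assert (EL : 0 < exp (-L) <= 1).
  { split. apply exp_pos. rewrite <- exp_0. destruct (Req_dec L 0) as [Z|Z].
    rewrite Z, Ropp_0; lra. left; apply exp_increasing; lra. }
  assert (Eq : aa s n - a1 n = exp (-L) * h * q1 - ((q1 + L) - (q2 + L'))/2).
  { unfold aa, a1, tt, dd, Rpower. fold L L'.
    replace (-s * L) with (-L + h * - L) by (unfold h; ring).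
    replace ((1 - s) * L) with (h * - L) by (unfold h; ring).
    replace ((1 - s) * L') with (h * - L') by (unfold h; ring).
    rewrite exp_plus, Ex1, Ex2.
    replace (/ mm n) with (exp (-L)).
    2:{ unfold L. rewrite exp_Ropp, exp_ln; auto. pose proof (mm_pos n); lra. }
    replace (2 * (s-1)) with (2*h) by (unfold h; ring). field. lra. }
  rewrite Eq.
  apply Rabs_def2 in H1. apply Rabs_def2 in H2.
  assert (Hq1 : Rabs q1 <= L + 1) by (apply Rabs_le; lra).
  assert (P : Rabs (exp (-L) * h * q1) <= h * (L+1)).
  { rewrite !Rabs_mult, (Rabs_pos_eq (exp (-L))) by lra. rewrite (Rabs_pos_eq h) by lra.
    assert (0 <= Rabs q1) by apply Rabs_pos.
    apply Rle_trans with (1 * h * (L+1)); [|lra].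
    apply Rmult_le_compat; try nra. }
  assert (Hhd : h * (L+1) <= eps/2).
  { assert (h < d3) by lra. unfold d3 in H. 
    apply Rlt_le. apply Rlt_le_trans with (eps / (2 * (L + 1)) * (L+1)).
    apply Rmult_lt_compat_r; lra. right; field; lra. }
  apply Rabs_le_between in P. apply Rabs_def1; lra.
Qed.

Lemma sum_cont N : forall eps, 0 < eps -> exists d, 0 < d /\
  forall s, 1 < s < 1 + d -> Rabs (sum_n (aa s) N - sum_n a1 N) < eps.
Proof.
  induction N; intros eps He.
  - destruct (aa_cont O eps He) as [d [Hd H]]. exists d; split; auto.
    intros s Hs. rewrite !sum_O. auto.
  - destruct (IHN (eps/2) ltac:(lra)) as [d1 [Hd1 H1]].
    destruct (aa_cont (S N) (eps/2) ltac:(lra)) as [d2 [Hd2 H2]].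
    exists (Rmin d1 d2). split; [apply Rmin_pos; auto|].
    intros s Hs. pose proof (Rmin_l d1 d2). pose proof (Rmin_r d1 d2).
    specialize (H1 s ltac:(lra)). specialize (H2 s ltac:(lra)).
    rewrite !sum_Sn. change (plus ?a ?b) with (a + b).
    apply Rabs_def2 in H1. apply Rabs_def2 in H2. apply Rabs_def1; lra.
Qed.

Lemma tt_le s n : 1 <= s -> tt s n <= / mm n.
Proof.
  intros Hs. unfold tt. pose proof (mm_pos n).
  rewrite <- (Rpower_1 (mm n)) at 2 by lra. rewrite <- Rpower_Ropp.
  apply Rle_Rpower; lra.
Qed.

Lemma FF_cont : forall eps, 0 < eps -> exists d, 0 < d /\
  forall s, 1 < s < 1 + d -> Rabs (FF s - (euler_gamma + ln 2)/2) < eps.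
Proof.
  intros eps He.
  destruct (INR_unbounded (3/eps)) as [N HN].
  assert (HmN : / mm (S N) < eps/3).
  { rewrite mm_S. unfold mm. pose proof (pos_INR N).
    apply Rlt_le_trans with (/ (3/eps)).
    - apply Rinv_lt_contravar. apply Rmult_lt_0_compat; [apply Rdiv_lt_0_compat; lra| lra]. lra.
    - right. field. lra. }
  destruct (sum_cont N (eps/3) ltac:(lra)) as [d [Hd H]].
  exists d. split; auto. intros s Hs. specialize (H s Hs).
  destruct (FF_spec s ltac:(lra) N) as [[F1 F2] _].
  pose proof (tt_le s (S N) ltac:(lra)).
  pose proof (c_bounds N).
  apply Rabs_def2 in H. apply Rabs_def1; lra.
Qed.

Lemma alg (y A B Dd R : R) : 0 < y -> Dd * y = 1 -> 0 <= Dd <= B -> B <= A -> A <= 1 ->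
  Rabs R <= Dd ->
  Rabs (/ ((1 + A + B + Dd + R)/y) - (y - y*A - y*B + y*A*A - 1))
   <= 15 * (y*A*B) + 4 * (y*A*A*A) + y * Rabs R.
Proof.
  intros Hy HD HDB HBA HA HR.
  apply Rabs_le_between in HR.
  set (v := B + Dd + R).
  assert (Hv : 0 <= v <= 3*B) by (unfold v; lra).
  set (u := A + v).
  assert (Hu : 0 <= u) by (unfold u; lra).
  set (N := u*u - A*A - A*A*u).
  assert (EZ : / ((1 + A + B + Dd + R)/y) - (y - y*A - y*B + y*A*A - 1) = y * (N/(1+u)) - y * R).
  { replace (1 + A + B + Dd + R) with (1+u) by (unfold u, v; ring).
    assert (Hd : Dd = / y) by (apply (Rmult_eq_reg_r y); [rewrite HD; field|]; lra).
    assert (H1u : 1 + u <> 0) by lra.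
    unfold N, u, v in *. rewrite Hd in *. field. split; [lra|]. assert (E1: y*(1+(A+(B+/y+R))) = y+(A*y+(B*y+1+R*y))) by (field; lra). assert (0 < y*(1+(A+(B+/y+R)))) by (apply Rmult_lt_0_compat; lra). lra. }
  rewrite EZ.
  assert (HN : Rabs N <= 15*A*B + 4*A*A*A).
  { apply Rabs_le.
    assert (N = v*(2*A+v) - A*A*u) by (unfold N, u; ring).
    assert (0 <= v*(2*A+v) <= 15*A*B) by (split; nra).
    assert (0 <= A*A*u <= 4*A*A*A) by (unfold u; split; nra).
    lra. }
  assert (HN2 : Rabs (N/(1+u)) <= Rabs N).
  { unfold Rdiv. rewrite Rabs_mult. rewrite Rabs_Rinv by lra. rewrite (Rabs_pos_eq (1+u)) by lra.
    pose proof (Rabs_pos N).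
    apply Rle_trans with (Rabs N * 1); [|lra]. apply Rmult_le_compat_l; auto.
    rewrite <- Rinv_1. apply Rinv_le_contravar; lra. }
  eapply Rle_trans. apply Rabs_triang. rewrite Rabs_Ropp, !Rabs_mult, (Rabs_pos_eq y) by lra.
  assert (y * Rabs (N/(1+u)) <= y * (15*A*B + 4*A*A*A)) by (apply Rmult_le_compat_l; lra).
  lra.
Qed.

Lemma tail4 s : 1 < s ->
  Rpower 11 (1-s)/(2*(s-1)) <= dlambda s - sum_n (tt s) 4 <= Rpower 11 (1-s)/(2*(s-1)) + tt s 5.
Proof.
  intros Hs. rewrite dlambda_eq by auto.
  destruct (FF_spec s Hs 4) as [[F1 F2] _].
  unfold aa in F1, F2. rewrite sum_n_minus, sum_dd in F1, F2 by auto.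
  replace (mm 5) with 11 in F1, F2 by (unfold mm; simpl; ring).
  assert (E : (1 - Rpower 11 (1 - s)) / (2 * (s - 1)) = / (2*(s-1)) - Rpower 11 (1-s)/(2*(s-1))) by (field; lra).
  rewrite E in F1, F2. lra.
Qed.

Lemma sum_tt4 s : sum_n (tt s) 4 = 1 + tt s 1 + tt s 2 + tt s 3 + tt s 4.
Proof.
  rewrite !sum_Sn, sum_O. change (plus ?a ?b) with (a + b).
  unfold tt at 1. replace (mm 0) with 1 by (unfold mm; simpl; ring). rewrite Rpower_1_base.
  match goal with |- ?a = ?b => change (@eq R a b) end. reflexivity.
Qed.

Lemma Rpower_pos a x : 0 < Rpower a x.
Proof. unfold Rpower. apply exp_pos. Qed.

Lemma exp_le' a b : a <= b -> exp a <= exp b.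
Proof. intros [H|H]. left; apply exp_increasing; auto. subst; lra. Qed.

Lemma Rpower_mono a b x : 0 < a -> a <= b -> 0 <= x -> Rpower a x <= Rpower b x.
Proof.
  intros Ha Hab Hx. unfold Rpower. apply exp_le'. apply Rmult_le_compat_l; auto.
  apply ln_le; auto.
Qed.

Lemma Rpower_small q x : 0 < q < 1 -> 0 < x -> Rpower q x <= / (x * - ln q) /\ 0 < - ln q.
Proof.
  intros Hq Hx.
  assert (Hl : ln q < 0) by (rewrite <- ln_1; apply ln_increasing; lra).
  split; [|lra].
  unfold Rpower. replace (x * ln q) with (- (x * - ln q)) by ring.
  rewrite exp_Ropp. apply Rinv_le_contravar. apply Rmult_lt_0_compat; lra.
  pose proof (exp_ineq1_le (x * - ln q)). lra.
Qed.

Lemma Rpower_mul a b x : 0 < a -> 0 < b -> Rpower a x * Rpower b x = Rpower (a*b) x.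
Proof. apply Rpower_mult_distr. Qed.

Lemma tt_eq n x : tt x n = / Rpower (mm n) x.
Proof. unfold tt. apply Rpower_Ropp. Qed.

Section PB.
Variable x : R.
Hypothesis Hx : 7 <= x.

Let y := Rpower 3 x.
Let A := Rpower (3/5) x.
Let B := Rpower (3/7) x.

Lemma y_pos : 0 < y. Proof. apply Rpower_pos. Qed.

Lemma e1 : tt x 1 = / y.
Proof. rewrite tt_eq. f_equal. unfold y. f_equal. unfold mm; simpl; ring. Qed.

Lemma e2 : tt x 2 = A / y.
Proof.
  rewrite tt_eq. replace (mm 2) with 5 by (unfold mm; simpl; ring).
  unfold A, y. replace 3 with ((3/5) * 5) at 2 by field.
  rewrite <- Rpower_mul by lra. pose proof (Rpower_pos (3/5) x). pose proof (Rpower_pos 5 x).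
  field. lra.
Qed.

Lemma e3 : tt x 3 = B / y.
Proof.
  rewrite tt_eq. replace (mm 3) with 7 by (unfold mm; simpl; ring).
  unfold B, y. replace 3 with ((3/7) * 7) at 2 by field.
  rewrite <- Rpower_mul by lra. pose proof (Rpower_pos (3/7) x). pose proof (Rpower_pos 7 x).
  field. lra.
Qed.

Lemma e4 : tt x 4 = / (y*y).
Proof.
  rewrite tt_eq. replace (mm 4) with (3*3) by (unfold mm; simpl; ring).
  unfold y. rewrite Rpower_mul by lra. reflexivity.
Qed.

Lemma e11 : Rpower 11 (1-x) = 11 / Rpower 11 x.
Proof.
  replace (1-x) with (1 + - x) by ring. rewrite Rpower_plus, Rpower_1, Rpower_Ropp by lra.
  reflexivity.
Qed.

Lemma e5 : tt x 5 = / Rpower 11 x.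
Proof. rewrite tt_eq. f_equal. f_equal. unfold mm; simpl; ring. Qed.

Lemma eC : y * y = Rpower (9/11) x * Rpower 11 x.
Proof. unfold y. rewrite !Rpower_mul by lra. f_equal. field. Qed.

Lemma eP : Rpower 3 x - Rpower (9 / 5) x - Rpower (9 / 7) x + Rpower (27 / 25) x - 1
   = y - y*A - y*B + y*A*A - 1.
Proof.
  unfold y, A, B.
  replace (9/5) with (3*(3/5)) by field. replace (9/7) with (3*(3/7)) by field.
  replace (27/25) with (3*((3/5)*(3/5))) by field.
  rewrite <- !Rpower_mul by lra. ring.
Qed.

Lemma eAB : y*A*B = Rpower (27/35) x.
Proof. unfold y, A, B. rewrite !Rpower_mul by lra. f_equal. field. Qed.

Lemma eAAA : y*A*A*A = Rpower (81/125) x.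
Proof. unfold y, A. rewrite !Rpower_mul by lra. f_equal. field. Qed.

Lemma order : / y <= B /\ B <= A /\ A <= 1.
Proof.
  split; [|split].
  - replace (/ y) with (Rpower (1/3) x).
    + apply Rpower_mono; lra.
    + unfold y. rewrite <- Rpower_Ropp. unfold Rpower. f_equal.
      unfold Rdiv. rewrite Rmult_1_l, ln_Rinv by lra. ring.
  - apply Rpower_mono; lra.
  - unfold A. rewrite <- (Rpower_1_base x). apply Rpower_mono; lra.
Qed.

Lemma partB : Rpower (9/11) x <= 1/2 ->
  0 < dlambda x - 1 <= 5 / y /\
  Rabs (/ (dlambda x - 1) - (Rpower 3 x - Rpower (9 / 5) x - Rpower (9 / 7) x + Rpower (27 / 25) x - 1))
  <= 15 * Rpower (27/35) x + 4 * Rpower (81/125) x + 2 * Rpower (9/11) x.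
Proof.
  intros HC.
  pose proof y_pos as Hy. pose proof order as [O1 [O2 O3]].
  pose proof (tail4 x ltac:(lra)) as T. rewrite sum_tt4, e1, e2, e3, e4, e11, e5 in T.
  set (W := dlambda x - (1 + / y + A / y + B / y + / (y*y))) in T.
  set (R := y * W).
  set (C := Rpower (9/11) x) in *.
  pose proof (Rpower_pos 11 x) as P11. set (E := Rpower 11 x) in *.
  pose proof (Rpower_pos (9/11) x) as PC. fold C in PC.
  pose proof eC as EC. fold C E in EC.
  assert (HR0 : 0 <= R).
  { unfold R. destruct T as [T1 _]. apply Rmult_le_pos; [lra|].
    eapply Rle_trans; [|apply T1]. left. apply Rdiv_lt_0_compat; [|lra].
    apply Rdiv_lt_0_compat; lra. }
  assert (HyR : y * R <= 2 * C).
  { destruct T as [_ T2]. unfold R.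
    apply Rle_trans with (y * y * (11 / E / (2 * (x - 1)) + / E)).
    { rewrite Rmult_assoc. apply Rmult_le_compat_l; [lra|]. apply Rmult_le_compat_l; lra. }
    rewrite EC. replace (C * E * (11 / E / (2 * (x - 1)) + / E)) with (C * (11 / (2*(x-1)) + 1)) by (field; lra).
    assert (11 / (2*(x-1)) <= 1) by (apply div_le_h; lra). nra. }
  assert (HR2 : Rabs R <= / y).
  { rewrite Rabs_pos_eq by auto.
    apply (Rmult_le_reg_l y); [lra|]. replace (y * / y) with 1 by (field; lra). lra. }
  assert (Hlam : dlambda x - 1 = (1 + A + B + / y + R) / y).
  { unfold R, W. field. lra. }
  assert (HD : / y * y = 1) by (field; lra).
  pose proof (alg y A B (/ y) R Hy HD ltac:(split; [left; apply Rinv_0_lt_compat; lra|lra]) O2 O3 HR2) as Al.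
  split.
  - rewrite Hlam. apply Rabs_le_between in HR2. split.
    + apply Rdiv_lt_0_compat; [|lra]. assert (0 < A) by apply Rpower_pos.
      assert (0 < B) by apply Rpower_pos. lra.
    + unfold Rdiv. apply Rmult_le_compat_r. left; apply Rinv_0_lt_compat; lra.
      assert (/ y <= 1) by lra. lra.
  - rewrite Hlam, eP. eapply Rle_trans; [apply Al|].
    rewrite eAB, eAAA. rewrite Rabs_pos_eq by auto. lra.
Qed.

End PB.



Lemma kx_lt K t x : 0 < K -> 0 < t -> K / t < x -> K / x < t.
Proof.
  intros HK Ht Hx. assert (0 < K/t) by (apply Rdiv_lt_0_compat; auto).
  assert (Hx0 : 0 < x) by lra.
  apply (Rmult_lt_reg_r x); auto. unfold Rdiv. rewrite Rmult_assoc, Rinv_l, Rmult_1_r by lra.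
  apply (Rmult_lt_compat_l t) in Hx; auto. replace (t * (K / t)) with K in Hx by (field; lra). lra.
Qed.

Theorem mainTheorem13 :
  is_lim
    (fun x : R =>
       dlambda (dlambda x)
       - / 2 * (Rpower 3 x - Rpower (9 / 5) x - Rpower (9 / 7) x
                + Rpower (27 / 25) x - 1))
    p_infty
    (/ 2 * (euler_gamma + ln 2)).
Proof.
  apply is_lim_spec. intros eps. simpl.
  pose proof (cond_pos eps) as He.
  destruct (FF_cont (eps/2) ltac:(lra)) as [d [Hd Hc]].
  destruct (Rpower_small (27/35) 1 ltac:(lra) ltac:(lra)) as [_ c1].
  destruct (Rpower_small (81/125) 1 ltac:(lra) ltac:(lra)) as [_ c2].
  destruct (Rpower_small (9/11) 1 ltac:(lra) ltac:(lra)) as [_ c3].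
  assert (l3 : 0 < ln 3) by (rewrite <- ln_1; apply ln_increasing; lra).
  set (K1 := 15 / (- ln (27/35)) + 4 / (- ln (81/125)) + 2 / (- ln (9/11))).
  assert (HK1 : 0 < K1).
  { unfold K1. assert (0 < 15 / (- ln (27/35))) by (apply Rdiv_lt_0_compat; lra).
    assert (0 < 4 / (- ln (81/125))) by (apply Rdiv_lt_0_compat; lra).
    assert (0 < 2 / (- ln (9/11))) by (apply Rdiv_lt_0_compat; lra). lra. }
  set (K2 := 5 / ln 3).
  assert (HK2 : 0 < K2) by (apply Rdiv_lt_0_compat; lra).
  set (K3 := 1 / (- ln (9/11))).
  assert (HK3 : 0 < K3) by (apply Rdiv_lt_0_compat; lra).
  assert (P1 : 0 < K1 / eps) by (apply Rdiv_lt_0_compat; lra).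
  assert (P2 : 0 < K2 / d) by (apply Rdiv_lt_0_compat; lra).
  assert (P3 : 0 < K3 / (1/2)) by (apply Rdiv_lt_0_compat; lra).
  exists (7 + K1/eps + K2/d + K3/(1/2)).
  intros x Hx.
  destruct (Rpower_small (27/35) x ltac:(lra) ltac:(lra)) as [r1 _].
  destruct (Rpower_small (81/125) x ltac:(lra) ltac:(lra)) as [r2 _].
  destruct (Rpower_small (9/11) x ltac:(lra) ltac:(lra)) as [r3 _].
  assert (Ei : forall c, 0 < c -> / (x * c) = (1/c) / x).
  { intros c Hc0. field. split; lra. }
  rewrite Ei in r1, r2, r3 by lra. fold K3 in r3.
  assert (HC9 : Rpower (9/11) x <= 1/2).
  { eapply Rle_trans; [apply r3|]. left. apply kx_lt; auto. lra. lra. }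
  destruct (partB x ltac:(lra) HC9) as [[E1 E2] Z].
  assert (Hy : 5 / Rpower 3 x < d).
  { assert (1 + x * ln 3 <= Rpower 3 x) by (unfold Rpower; apply exp_ineq1_le). assert (0 < Rpower 3 x) by apply Rpower_pos.
    apply Rle_lt_trans with (5 / (x * ln 3)).
    - unfold Rdiv; apply Rmult_le_compat_l; [lra|]. apply Rinv_le_contravar; nra.
    - replace (5/(x*ln 3)) with (K2/x) by (unfold K2; field; lra). apply kx_lt; auto. lra. }
  specialize (Hc (dlambda x) ltac:(lra)).
  rewrite (dlambda_eq (dlambda x)) by lra.
  set (P := Rpower 3 x - Rpower (9 / 5) x - Rpower (9 / 7) x + Rpower (27 / 25) x - 1) in *.
  set (E := dlambda x - 1) in *.
  replace (dlambda x - 1) with E by reflexivity.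
  assert (HZ : 15 * Rpower (27 / 35) x + 4 * Rpower (81 / 125) x + 2 * Rpower (9 / 11) x < eps).
  { apply Rle_lt_trans with (K1 / x).
    - unfold K1. replace ((15 / - ln (27 / 35) + 4 / - ln (81 / 125) + 2 / - ln (9 / 11)) / x)
       with (15 * (1 / - ln (27/35) / x) + 4 * (1 / - ln (81/125) / x) + 2 * (1 / - ln (9/11) / x))
       by (field; repeat split; lra). unfold K3 in r3. lra.
    - apply kx_lt; auto. lra. }
  replace (FF (dlambda x) + / (2 * E) - / 2 * P - / 2 * (euler_gamma + ln 2))
    with ((FF (dlambda x) - (euler_gamma + ln 2) / 2) + (/ E - P) / 2)
    by (field; lra).
  apply Rabs_def2 in Hc. apply Rabs_le_between in Z. apply Rabs_def1; lra.
Qed.
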